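(* Coefficientwise in $\mathbb{Z}[\![t]\!]$ the following congruences hold: \begin{align*} U(t) &\equiv (1+20t+10t^{2}) U(t^{5}) \pmod{5^{2}} ,\\ V(t) &\equiv (1+15t +5t^{2}) U(t^{5}) \pmod{5^{2}} ,\\ U(t) &\equiv \frac{ 1+22 t+7 t^{2}+21 t^{3} +t^{7} +36t^{8} }{ 1+t^{7} }\, U(t^{7}) \pmod{7^{2}} ,\\ V(t) &\equiv \frac{ 1+7 t+42 t^{2}+7 t^{3} +43 t^{7} }{ 1+t^{7} }\, U(t^{7}) \pmod{7^{2}} . \end{align*}
   Context: For $r\ge0$ let $u_{r} = \frac{(6r)!}{(3r)!\, r!^{3}}$, $U(t)=\sum_{r\ge0}u_rt^r={}_3F_2(\tfrac16,\tfrac12,\tfrac56;1,1;1728t)$ and $V(t)=\sum_{r\ge0}(6r+1)u_rt^r$. Division by $1+t^7$ is taken in $\mathbb{Z}[\![t]\!]$; a congruence modulo $N$ of power series means all coefficients of the difference are divisible by $N$. *)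

(* Defs.v *)
From mathcomp Require Import all_boot all_order all_algebra.
Set Implicit Arguments. Unset Strict Implicit. Unset Printing Implicit Defensive.
Import GRing.Theory Num.Theory.
Local Open Scope ring_scope.

(* Formal power series in Z[[t]] represented by their coefficient sequences. *)
Definition series := nat -> int.

(* u_r = (6r)! / ((3r)! r!^3)  (an integer; the division is exact). *)
Definition u (r : nat) : int :=
  (((6 * r)`! %/ ((3 * r)`! * (r`! ^ 3)))%N)%:Z.

Definition U : series := fun r => u r.
Definition V : series := fun r => ((6 * r + 1)%N)%:Z * u r.

(* f(t^k) *)
Definition subst_pow (k : nat) (f : series) : series :=
  fun n => if (k %| n)%N then f (n %/ k)%N else 0.

(* polynomial with coefficient list s (constant term first) *)
Definition polyS (s : seq int) : series := fun n => nth 0 s n.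

Definition smul (f g : series) : series :=
  fun n => \sum_(i < n.+1) f i * g (n - i)%N.

(* 1/(1+t^7) = sum_k (-1)^k t^(7k) in Z[[t]] *)
Definition inv_1pt7 : series :=
  fun n => if (7 %| n)%N then (-1) ^+ (n %/ 7)%N else 0.

Definition sdiv_1pt7 (f : series) : series := smul f inv_1pt7.

Definition scong (N : int) (f g : series) : Prop :=
  forall n : nat, (N %| (f n - g n))%Z.

(* Main.v *)
Require Import Defs.
From mathcomp Require Import all_boot all_order all_algebra.
From mathcomp Require Import zify ring lra.
Set Implicit Arguments. Unset Strict Implicit. Unset Printing Implicit Defensive.
Import GRing.Theory Num.Theory.
Local Open Scope ring_scope.

Definition un (r : nat) : nat := ((6 * r)`! %/ ((3 * r)`! * (r`! ^ 3)))%N.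

Lemma un_fact r : (un r * ((3 * r)`! * r`! ^ 3) = (6 * r)`!)%N.
Proof.
rewrite /un divnK //.
have h6 : ('C(6*r, 3*r) * ((3*r)`! * (3*r)`!) = (6*r)`!)%N.
  have := bin_fact (_ : 3 * r <= 6 * r)%N; rewrite (_ : 6 * r - 3 * r = 3 * r)%N; last lia.
  by apply; lia.
have h3 : ('C(3*r, r) * (r`! * (2*r)`!) = (3*r)`!)%N.
  have := bin_fact (_ : r <= 3 * r)%N; rewrite (_ : 3 * r - r = 2 * r)%N; last lia.
  by apply; lia.
have h2 : ('C(2*r, r) * (r`! * r`!) = (2*r)`!)%N.
  have := bin_fact (_ : r <= 2 * r)%N; rewrite (_ : 2 * r - r = r)%N; last lia.
  by apply; lia.
have hA : (r`! ^ 3 %| (3*r)`!)%N.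
  rewrite -h3 -h2 (_ : r`! ^ 3 = r`! * (r`! * r`!))%N; last by rewrite !expnS expn0 muln1.
  apply: dvdn_mull; apply: dvdn_mul => //; exact: dvdn_mull.
rewrite -h6; apply: dvdn_mull; exact: dvdn_mul.
Qed.

Lemma factD1 n : ((n + 1)`! = (n + 1) * n`!)%N.
Proof. by rewrite addn1 factS. Qed.

Lemma un_rec r : (un r.+1 * r.+1 ^ 3 = 24 * (6*r+1) * (2*r+1) * (6*r+5) * un r)%N.
Proof.
have h1 := un_fact r.+1; have h0 := un_fact r.
have e6 : (6 * r.+1 = 6 * r + 1 + 1 + 1 + 1 + 1 + 1)%N by lia.
have e3 : (3 * r.+1 = 3 * r + 1 + 1 + 1)%N by lia.
have e1 : (r.+1 = r + 1)%N by lia.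
rewrite e6 e3 e1 !factD1 -h0 in h1.
rewrite e1.
have hp : (0 < (3 * r)`! * r`! ^ 3 * (3*r+1) * (3*r+2) * (3*r+3))%N.
  have := fact_gt0 (3*r); have := fact_gt0 r; move=> a b; rewrite !muln_gt0 b a /=; lia.
apply/eqP; rewrite -(eqn_pmul2r hp); apply/eqP.
set F3 := (3*r)`! in h1 *; set F1 := r`! in h1 *.
set x := un (r+1) in h1 *. set y := un r in h1 *.
rewrite (_ : (x * (r + 1) ^ 3 * (F3 * F1 ^ 3 * (3 * r + 1) * (3 * r + 2) * (3 * r + 3)))%N = (x * ((3 * r + 1 + 1 + 1) * ((3 * r + 1 + 1) * ((3 * r + 1) * F3)) * ((r + 1) * F1) ^ 3))%N); last by ring.
rewrite h1; ring.
Qed.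

Lemma urec (r : nat) : u r.+1 * (r%:Z + 1) ^+ 3 = 24 * (6 * r%:Z + 1) * (2 * r%:Z + 1) * (6 * r%:Z + 5) * u r.
Proof.
have h := un_rec r.
rewrite !expnS expn0 muln1 in h.
have := congr1 Posz h; rewrite /u -/(un _) -/(un r).
move=> hh.
have e : (r.+1)%:Z = r%:Z + 1 by rewrite intS addrC.
rewrite -e; rewrite PoszM in hh. rewrite hh -!natz !(natrM, natrD) !natz; ring.
Qed.

Definition cg (N a b : int) : Prop := (N %| a - b)%Z.

Lemma cg_refl N a : cg N a a.
Proof. by rewrite /cg subrr dvdz0. Qed.

Lemma cg_eq N a b : a = b -> cg N a b.
Proof. by move=> ->; apply: cg_refl. Qed.

Lemma cg_sym N a b : cg N a b -> cg N b a.
Proof. by rewrite /cg -opprB rpredN. Qed.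

Lemma cg_trans N a b c : cg N a b -> cg N b c -> cg N a c.
Proof. rewrite /cg => h1 h2; rewrite (_ : a - c = (a - b) + (b - c)); last ring.
exact: rpredD. Qed.

Lemma cgD N a b c d : cg N a b -> cg N c d -> cg N (a + c) (b + d).
Proof. rewrite /cg => h1 h2; rewrite (_ : a + c - (b + d) = (a - b) + (c - d)); last ring.
exact: rpredD. Qed.

Lemma cgM N a b c d : cg N a b -> cg N c d -> cg N (a * c) (b * d).
Proof. rewrite /cg => h1 h2; rewrite (_ : a * c - b * d = (a - b) * c + b * (c - d)); last ring.
apply: rpredD; [exact: dvdz_mulr | exact: dvdz_mull]. Qed.

Lemma cgX N a b k : cg N a b -> cg N (a ^+ k) (b ^+ k).
Proof. move=> h; elim: k => [|k IH]; first exact: cg_refl.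
rewrite !exprS; exact: cgM. Qed.

Lemma cg_dvd N a b : (N %| a - b)%Z -> cg N a b.
Proof. by []. Qed.

Lemma stepU (N p a a' e b x y uk Yc Tc A B Z : int) :
  N = p * p -> a * x = b * y -> a * a' = 1 + N * e -> cg N y (Yc * uk) ->
  a' * b * Yc - Tc = N * A + p * B * Z -> (p %| Z * uk)%Z -> cg N x (Tc * uk).
Proof.
move=> hN hr ha hy hP hZ; rewrite /cg.
have -> : x - Tc * uk = a' * b * (y - Yc * uk) + (a' * b * Yc - Tc) * uk - N * e * x + a' * (a * x - b * y).
  have hx : x = x * (a * a' - N * e) by rewrite ha; ring.
  rewrite {1}hx; ring.
rewrite hr subrr mulr0 addr0 hP.
apply: rpredB; last by apply: dvdz_mulr; apply: dvdz_mulr.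
apply: rpredD; first exact: dvdz_mull.
rewrite mulrDl; apply: rpredD; first by apply: dvdz_mulr; apply: dvdz_mulr.
rewrite hN (_ : p * B * Z * uk = p * (B * (Z * uk))); last ring.
by apply: dvdz_mul => //; apply: dvdz_mull.
Qed.

Lemma stepP (N a a' e b x y uk Yc Tc A : int) :
  a * x = b * y -> a * a' = 1 + N * e -> cg N y (Yc * uk) ->
  a' * b * Yc - Tc = N * A -> cg N x (Tc * uk).
Proof.
move=> hr ha hy hP; rewrite /cg.
have -> : x - Tc * uk = a' * b * (y - Yc * uk) + (a' * b * Yc - Tc) * uk - N * e * x + a' * (a * x - b * y).
  have hx : x = x * (a * a' - N * e) by rewrite ha; ring.
  rewrite {1}hx; ring.
rewrite hr subrr mulr0 addr0 hP.
apply: rpredB; last by apply: dvdz_mulr; apply: dvdz_mulr.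
apply: rpredD; first exact: dvdz_mull.
by apply: dvdz_mulr; apply: dvdz_mulr.
Qed.

Lemma mulU (N p c x uk Tc Tc' A B Z : int) :
  N = p * p -> cg N x (Tc * uk) -> c * Tc - Tc' = N * A + p * B * Z -> (p %| Z * uk)%Z ->
  cg N (c * x) (Tc' * uk).
Proof.
move=> hN hx hP hZ; rewrite /cg.
have -> : c * x - Tc' * uk = c * (x - Tc * uk) + (c * Tc - Tc') * uk by ring.
apply: rpredD; first exact: dvdz_mull.
rewrite hP mulrDl; apply: rpredD; first by apply: dvdz_mulr; apply: dvdz_mulr.
rewrite hN (_ : p * B * Z * uk = p * (B * (Z * uk))); last ring.
by apply: dvdz_mul => //; apply: dvdz_mull.
Qed.

Lemma stepU' (N p x a b y a' e uk Yc Tc A B Z : int) :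
  x * a = b * y -> N = p * p -> a * a' = 1 + N * e -> cg N y (Yc * uk) ->
  a' * b * Yc - Tc = N * A + p * B * Z -> (p %| Z * uk)%Z -> cg N x (Tc * uk).
Proof. move=> hr hN; apply: (stepU hN); by rewrite mulrC. Qed.

Lemma stepP0 (N x a b y a' e : int) :
  x * a = b * y -> a * a' = 1 + N * e -> (N %| b * y)%Z -> cg N x 0.
Proof.
move=> hr ha hb; rewrite /cg subr0.
have -> : x = a' * (x * a) - N * e * x.
  have hx : x = x * (a * a' - N * e) by rewrite ha; ring.
  rewrite {1}hx; ring.
rewrite hr; apply: rpredB; first exact: dvdz_mull.
by apply: dvdz_mulr; apply: dvdz_mulr.
Qed.

Lemma keyL (x a b y a' e c1 c2 A B Zf : int) :
  x * a = b * y -> a * a' = 1 + 7 * e -> c1 * a' * b + c2 = 7 * A + B * Zf ->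
  (7 %| Zf * y)%Z -> (7 %| c1 * x + c2 * y)%Z.
Proof.
move=> hr ha hP hZ.
have -> : c1 * x + c2 * y = (c1 * a' * b + c2) * y - 7 * e * c1 * x + c1 * a' * (x * a - b * y).
  have hx : x = x * (a * a' - 7 * e) by rewrite ha; ring.
  rewrite {1}hx; ring.
rewrite hr subrr mulr0 addr0 hP mulrDl.
apply: rpredB; last by apply: dvdz_mulr; apply: dvdz_mulr; apply: dvdz_mulr.
apply: rpredD; first by apply: dvdz_mulr; apply: dvdz_mulr.
by rewrite -mulrA; apply: dvdz_mull.
Qed.

Lemma urecS (p k j : nat) :
  u (p * k + j.+1) * (p%:Z * k%:Z + j%:Z + 1) ^+ 3 =
  24 * (6 * (p%:Z * k%:Z + j%:Z) + 1) * (2 * (p%:Z * k%:Z + j%:Z) + 1) * (6 * (p%:Z * k%:Z + j%:Z) + 5) * u (p * k + j).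
Proof. by rewrite addnS -PoszM -PoszD urec. Qed.

Lemma Zapply (p Z1 Z2 uk : int) : (p %| Z1 * uk)%Z -> Z2 = Z1 -> (p %| Z2 * uk)%Z.
Proof. by move=> h ->. Qed.

Definition Bp (p N : nat) : nat := (\prod_(1 <= l < p) (p * N + l))%N.

Fixpoint Fp (p N : nat) : nat := if N is N'.+1 then (Fp p N' * Bp p N')%N else 1%N.

Lemma fact_shift a q : ((a + q)`! = a`! * \prod_(1 <= l < q.+1) (a + l))%N.
Proof.
elim: q => [|q IH]; first by rewrite addn0 big_geq // muln1.
by rewrite addnS factS IH [in RHS]big_nat_recr //= -addnS; ring.
Qed.

Lemma factF p N : (0 < p)%N -> ((p * N)`! = p ^ N * N`! * Fp p N)%N.
Proof.
move=> hp; elim: N => [|N IH]; first by rewrite muln0 /= fact0 expn0.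
rewrite mulnS addnC fact_shift IH /= /Bp.
case: p hp IH => // p _ IH.
rewrite big_nat_recr //= expnS factS.
rewrite (_ : (p.+1 * N + p.+1 = p.+1 * N.+1)%N); last by rewrite mulnS addnC.
ring.
Qed.

Lemma u_babbage_eq p m : (0 < p)%N ->
  (un (p * m) * (Fp p (3 * m) * Fp p m ^ 3) = un m * Fp p (6 * m))%N.
Proof.
move=> hp.
have h1 := un_fact (p * m); have h0 := un_fact m.
rewrite (_ : (3 * (p * m) = p * (3 * m))%N) in h1; last by rewrite mulnCA.
rewrite (_ : (6 * (p * m) = p * (6 * m))%N) in h1; last by rewrite mulnCA.
rewrite (factF (3 * m) hp) (factF m hp) (factF (6 * m) hp) -h0 in h1.
have hp0 : (0 < p ^ (6 * m) * ((3 * m)`! * m`! ^ 3))%N.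
  by rewrite !muln_gt0 expn_gt0 hp !fact_gt0.
apply/eqP; rewrite -(eqn_pmul2r hp0); apply/eqP.
have e3 : (p ^ (3 * m) = (p ^ m) ^ 3)%N by rewrite mulnC expnM.
have e6 : (p ^ (6 * m) = (p ^ m) ^ 6)%N by rewrite mulnC expnM.
rewrite e3 e6 in h1; rewrite e6.
move: h1.
set P1 := (p ^ m)%N. set A3 := (3 * m)`!. set A1 := m`!.
move=> h1.
rewrite (_ : (_ * _ = un (p * m) * (P1 ^ 3 * A3 * Fp p (3 * m) * (P1 * A1 * Fp p m) ^ 3)))%N; last by ring.
rewrite h1; ring.
Qed.

Lemma babbage p c c6 d m : (0 < p)%N ->
  (forall N, cg (p%:Z * p%:Z) (Bp p N)%:Z c) -> cg (p%:Z * p%:Z) (c ^+ 6) c6 ->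
  cg (p%:Z * p%:Z) (c6 * d) 1 ->
  cg (p%:Z * p%:Z) (u (p * m)) (u m).
Proof.
move=> hp hB h6 hd.
set N := p%:Z * p%:Z.
have hF : forall n, cg N (Fp p n)%:Z (c ^+ n).
  elim=> [|n IH]; first exact: cg_refl.
  rewrite /= PoszM exprSr; exact: cgM.
have E := congr1 Posz (u_babbage_eq m hp).
rewrite -!natz !natrM !natz in E.
set F3 := (Fp p (3 * m))%:Z in E; set F1 := (Fp p m)%:Z in E; set F6 := (Fp p (6 * m))%:Z in E.
have hG : cg N (F3 * (F1 * (F1 * F1))) (c6 ^+ m).
  apply: (@cg_trans _ _ (c ^+ (3 * m) * (c ^+ m * (c ^+ m * c ^+ m)))).
    apply: cgM; first exact: hF.
    apply: cgM; first exact: hF.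
    apply: cgM; exact: hF.
  rewrite -!exprD (_ : (3 * m + (m + (m + m)) = 6 * m)%N); last lia.
  rewrite exprM; apply: cgX; exact: h6.
have hF6 : cg N F6 (c6 ^+ m).
  apply: (@cg_trans _ _ (c ^+ (6 * m))); first exact: hF.
  rewrite exprM; apply: cgX; exact: h6.
have hD : cg N ((c6 * d) ^+ m) 1 by rewrite -(expr1n _ m); apply: cgX.
apply: (@cg_trans _ _ (u (p * m) * (c6 * d) ^+ m)).
  apply: cg_sym; rewrite -[X in cg _ _ X]mulr1; apply: cgM => //; exact: cg_refl.
rewrite exprMn mulrA.
apply: (@cg_trans _ _ (u (p * m) * (F3 * (F1 * (F1 * F1))) * d ^+ m)).
  apply: cgM; last exact: cg_refl.
  apply: cgM; first exact: cg_refl. exact: cg_sym.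
rewrite /u /= E.
apply: (@cg_trans _ _ (u m * c6 ^+ m * d ^+ m)).
  apply: cgM; last exact: cg_refl.
  apply: cgM; first exact: cg_refl. exact: hF6.
rewrite -mulrA -exprMn -[X in cg _ _ X]mulr1; apply: cgM => //; exact: cg_refl.
Qed.

Lemma B5 N : cg (5%:Z * 5%:Z) (Bp 5 N)%:Z (-1).
Proof.
rewrite /Bp big_ltn // big_ltn // big_ltn // big_ltn // big_geq // muln1.
rewrite -!natz !(natrM, natrD) !natz.
apply/dvdzP; exists (25 * N%:Z ^+ 4 + 50 * N%:Z ^+ 3 + 35 * N%:Z ^+ 2 + 10 * N%:Z + 1).
ring.
Qed.

Lemma B7 N : cg (7%:Z * 7%:Z) (Bp 7 N)%:Z (-15).
Proof.
rewrite /Bp big_ltn // big_ltn // big_ltn // big_ltn // big_ltn // big_ltn // big_geq // muln1.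
rewrite -!natz !(natrM, natrD) !natz.
apply/dvdzP.
set X := 7 * N%:Z.
exists (N%:Z ^+ 2 * (X ^+ 4 + 21 * X ^+ 3 + 175 * X ^+ 2 + 735 * X + 1624) + 252 * N%:Z + 15).
rewrite /X; ring.
Qed.

Lemma bab5 m : cg 25 (u (5 * m)) (u m).
Proof.
apply: (@babbage 5 (-1) 1 1) => //; first exact: B5.
Qed.

Lemma bab7 m : cg 49 (u (7 * m)) (u m).
Proof.
apply: (@babbage 7 (-15) 36 15 m); [done | exact: B7 | | by []].
have h2 : cg 49 ((-15) ^+ 2) 29 by [].
have h4 : cg 49 (((-15) ^+ 2) * ((-15) ^+ 2)) 8.
  apply: (@cg_trans _ _ (29 * 29)); first exact: cgM. by [].
have h6 : cg 49 ((((-15) ^+ 2) * ((-15) ^+ 2)) * ((-15) ^+ 2)) 36.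
  apply: (@cg_trans _ _ (8 * 29)); first exact: cgM. by [].
by rewrite -!exprD in h6.
Qed.

Lemma m5_1 k : cg 5 (u (5 * k + 1)%N) 0.
Proof.
set K := k%:Z.
apply: (stepP0 (urecS 5 k 0) (a' := (1)) (e := (3 * K + 15 * K ^+ 2 + 25 * K ^+ 3))).
  by rewrite /K; ring.
apply/dvdzP; exists ((24 + (1 * 1000 + 104) * K + (12 * 1000 + 960) * K ^+ 2 + (43 * 1000 + 200) * K ^+ 3) * u (5 * k + 0)%N); rewrite /K; ring.
Qed.

Lemma m5_2 k : cg 5 (u (5 * k + 2)%N) 0.
Proof.
set K := k%:Z.
apply: (stepP0 (urecS 5 k 1) (a' := (2)) (e := (3 + 24 * K + 60 * K ^+ 2 + 50 * K ^+ 3))).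
  by rewrite /K; ring.
apply: dvdz_mull; have := m5_1 k; by rewrite /cg subr0.
Qed.

Lemma m5_3 k : cg 5 (u (5 * k + 3)%N) 0.
Proof.
set K := k%:Z.
apply: (stepP0 (urecS 5 k 2) (a' := (3)) (e := (16 + 81 * K + 135 * K ^+ 2 + 75 * K ^+ 3))).
  by rewrite /K; ring.
apply: dvdz_mull; have := m5_2 k; by rewrite /cg subr0.
Qed.

Lemma m5_4 k : cg 5 (u (5 * k + 4)%N) 0.
Proof.
set K := k%:Z.
apply: (stepP0 (urecS 5 k 3) (a' := (4)) (e := (51 + 192 * K + 240 * K ^+ 2 + 100 * K ^+ 3))).
  by rewrite /K; ring.
apply: dvdz_mull; have := m5_3 k; by rewrite /cg subr0.
Qed.

Lemma Z5 k : (5 %| k%:Z * u k)%Z.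
Proof.
rewrite (divn_eq k 5) (mulnC _ 5).
have : (k %% 5 < 5)%N by rewrite ltn_pmod.
case: (k %% 5)%N => [|[|[|[|[|j]]]]] // _.
- by apply: dvdz_mulr; rewrite addn0 PoszM; apply: dvdz_mulr.
- by apply: dvdz_mull; have := m5_1 (k %/ 5); rewrite /cg subr0.
- by apply: dvdz_mull; have := m5_2 (k %/ 5); rewrite /cg subr0.
- by apply: dvdz_mull; have := m5_3 (k %/ 5); rewrite /cg subr0.
- by apply: dvdz_mull; have := m5_4 (k %/ 5); rewrite /cg subr0.
Qed.

Lemma l5_1 k : cg 25 (u (5 * k + 1)%N) ((20) * u k).
Proof.
set K := k%:Z.
apply: (stepU' (urecS 5 k 0) (N := 25) (p := 5) (a' := (1 + 10 * K)) (e := (1 * K + 9 * K ^+ 2 + 35 * K ^+ 3 + 50 * K ^+ 4)) (Yc := (1)) (A := (4 + 268 * K + (4 * 1000 + 800) * K ^+ 2 + (34 * 1000 + 560) * K ^+ 3 + (86 * 1000 + 400) * K ^+ 4)) (B := (4)) (Z := (1 * K))).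
- by [].
- by rewrite /K; ring.
- by rewrite addn0 mul1r; exact: bab5.
- by rewrite /K; ring.
- apply: (Zapply (Z5 k)); rewrite /K; ring.
Qed.

Lemma l5_2 k : cg 25 (u (5 * k + 2)%N) ((10) * u k).
Proof.
set K := k%:Z.
apply: (stepU' (urecS 5 k 1) (N := 25) (p := 5) (a' := ((- 3) + 10 * K)) (e := ((- 1) + (- 4) * K + 6 * K ^+ 2 + 45 * K ^+ 3 + 50 * K ^+ 4)) (Yc := (20)) (A := ((- (13 * 1000 + 306)) + (- (93 * 1000 + 312)) * K + (- (7 * 1000 + 680)) * K ^+ 2 + ((1 * 1000 + 36) * 1000 + 800) * K ^+ 3 + ((1 * 1000 + 728) * 1000 + 0) * K ^+ 4)) (B := 0) (Z := (1 * K))).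
- by [].
- by rewrite /K; ring.
- exact: l5_1.
- by rewrite /K; ring.
- apply: (Zapply (Z5 k)); rewrite /K; ring.
Qed.

Lemma l5_3 k : cg 25 (u (5 * k + 3)%N) (0 * u k).
Proof.
set K := k%:Z.
apply: (stepU' (urecS 5 k 2) (N := 25) (p := 5) (a' := ((- 12) + 10 * K)) (e := ((- 13) + (- 54) * K + (- 54) * K ^+ 2 + 30 * K ^+ 3 + 50 * K ^+ 4)) (Yc := (10)) (A := ((- (127 * 1000 + 296)) + (- (666 * 1000 + 912)) * K + (- (911 * 1000 + 40)) * K ^+ 2 + (259 * 1000 + 200) * K ^+ 3 + (864 * 1000 + 0) * K ^+ 4)) (B := 0) (Z := (1 * K))).
- by [].
- by rewrite /K; ring.
- exact: l5_2.
- by rewrite /K; ring.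
- apply: (Zapply (Z5 k)); rewrite /K; ring.
Qed.

Lemma l5_4 k : cg 25 (u (5 * k + 4)%N) (0 * u k).
Proof.
set K := k%:Z.
apply: (stepU' (urecS 5 k 3) (N := 25) (p := 5) (a' := (9 + 10 * K)) (e := (23 + 112 * K + 204 * K ^+ 2 + 165 * K ^+ 3 + 50 * K ^+ 4)) (Yc := 0) (A := 0) (B := 0) (Z := (1 * K))).
- by [].
- by rewrite /K; ring.
- exact: l5_3.
- by rewrite /K; ring.
- apply: (Zapply (Z5 k)); rewrite /K; ring.
Qed.

Lemma v5_0 k : cg 25 (V (5 * k + 0)%N) ((1) * u k).
Proof.
set K := k%:Z.
rewrite /V (_ : Posz (6 * (5 * k + 0) + 1)%N = (1 + 30 * K)); last by rewrite /K -!natz !(natrM, natrD); ring.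
apply: (mulU (N := 25) (p := 5) (Tc := (1)) (A := (1 * K)) (B := (1)) (Z := (1 * K))).
- by [].
- by rewrite addn0 mul1r; exact: bab5.
- by rewrite /K; ring.
- apply: (Zapply (Z5 k)); rewrite /K; ring.
Qed.

Lemma v5_1 k : cg 25 (V (5 * k + 1)%N) ((15) * u k).
Proof.
set K := k%:Z.
rewrite /V (_ : Posz (6 * (5 * k + 1) + 1)%N = (7 + 30 * K)); last by rewrite /K -!natz !(natrM, natrD); ring.
apply: (mulU (N := 25) (p := 5) (Tc := (20)) (A := (5 + 24 * K)) (B := 0) (Z := (1 * K))).
- by [].
- exact: l5_1.
- by rewrite /K; ring.
- apply: (Zapply (Z5 k)); rewrite /K; ring.
Qed.

Lemma v5_2 k : cg 25 (V (5 * k + 2)%N) ((5) * u k).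
Proof.
set K := k%:Z.
rewrite /V (_ : Posz (6 * (5 * k + 2) + 1)%N = (13 + 30 * K)); last by rewrite /K -!natz !(natrM, natrD); ring.
apply: (mulU (N := 25) (p := 5) (Tc := (10)) (A := (5 + 12 * K)) (B := 0) (Z := (1 * K))).
- by [].
- exact: l5_2.
- by rewrite /K; ring.
- apply: (Zapply (Z5 k)); rewrite /K; ring.
Qed.

Lemma v5_3 k : cg 25 (V (5 * k + 3)%N) (0 * u k).
Proof.
set K := k%:Z.
rewrite /V (_ : Posz (6 * (5 * k + 3) + 1)%N = (19 + 30 * K)); last by rewrite /K -!natz !(natrM, natrD); ring.
apply: (mulU (N := 25) (p := 5) (Tc := 0) (A := 0) (B := 0) (Z := (1 * K))).
- by [].
- exact: l5_3.
- by rewrite /K; ring.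
- apply: (Zapply (Z5 k)); rewrite /K; ring.
Qed.

Lemma v5_4 k : cg 25 (V (5 * k + 4)%N) (0 * u k).
Proof.
set K := k%:Z.
rewrite /V (_ : Posz (6 * (5 * k + 4) + 1)%N = (25 + 30 * K)); last by rewrite /K -!natz !(natrM, natrD); ring.
apply: (mulU (N := 25) (p := 5) (Tc := 0) (A := 0) (B := 0) (Z := (1 * K))).
- by [].
- exact: l5_4.
- by rewrite /K; ring.
- apply: (Zapply (Z5 k)); rewrite /K; ring.
Qed.


Lemma m7_2 k : cg 7 (u (7 * k + 2)%N) 0.
Proof.
set K := k%:Z.
apply: (stepP0 (urecS 7 k 1) (a' := (1)) (e := (1 + 12 * K + 42 * K ^+ 2 + 49 * K ^+ 3))).
  by rewrite /K; ring.
apply/dvdzP; exists ((792 + (11 * 1000 + 472) * K + (54 * 1000 + 432) * K ^+ 2 + (84 * 1000 + 672) * K ^+ 3) * u (7 * k + 1)%N); rewrite /K; ring.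
Qed.

Lemma m7_3 k : cg 7 (u (7 * k + 3)%N) 0.
Proof.
set K := k%:Z.
apply: (stepP0 (urecS 7 k 2) (a' := (6)) (e := (23 + 162 * K + 378 * K ^+ 2 + 294 * K ^+ 3))).
  by rewrite /K; ring.
apply: dvdz_mull; have := m7_2 k; by rewrite /cg subr0.
Qed.

Lemma m7_4 k : cg 7 (u (7 * k + 4)%N) 0.
Proof.
set K := k%:Z.
apply: (stepP0 (urecS 7 k 3) (a' := (1)) (e := (9 + 48 * K + 84 * K ^+ 2 + 49 * K ^+ 3))).
  by rewrite /K; ring.
apply: dvdz_mull; have := m7_3 k; by rewrite /cg subr0.
Qed.

Lemma m7_5 k : cg 7 (u (7 * k + 5)%N) 0.
Proof.
set K := k%:Z.
apply: (stepP0 (urecS 7 k 4) (a' := (6)) (e := (107 + 450 * K + 630 * K ^+ 2 + 294 * K ^+ 3))).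
  by rewrite /K; ring.
apply: dvdz_mull; have := m7_4 k; by rewrite /cg subr0.
Qed.

Lemma m7_6 k : cg 7 (u (7 * k + 6)%N) 0.
Proof.
set K := k%:Z.
apply: (stepP0 (urecS 7 k 5) (a' := (6)) (e := (185 + 648 * K + 756 * K ^+ 2 + 294 * K ^+ 3))).
  by rewrite /K; ring.
apply: dvdz_mull; have := m7_5 k; by rewrite /cg subr0.
Qed.

Lemma Z7 k : (7 %| k%:Z * (k%:Z - 1) * u k)%Z.
Proof.
rewrite (divn_eq k 7) (mulnC _ 7).
have : (k %% 7 < 7)%N by rewrite ltn_pmod.
case: (k %% 7)%N => [|[|[|[|[|[|[|j]]]]]]] // _.
- by apply: dvdz_mulr; apply: dvdz_mulr; rewrite addn0 PoszM; apply: dvdz_mulr.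
- apply: dvdz_mulr; apply: dvdz_mull.
  by rewrite PoszD addrK PoszM; apply: dvdz_mulr.
- by apply: dvdz_mull; have := m7_2 (k %/ 7); rewrite /cg subr0.
- by apply: dvdz_mull; have := m7_3 (k %/ 7); rewrite /cg subr0.
- by apply: dvdz_mull; have := m7_4 (k %/ 7); rewrite /cg subr0.
- by apply: dvdz_mull; have := m7_5 (k %/ 7); rewrite /cg subr0.
- by apply: dvdz_mull; have := m7_6 (k %/ 7); rewrite /cg subr0.
Qed.

Lemma l7_1 k : cg 49 (u (7 * k + 1)%N) ((22 + 14 * (k%:Z)) * u k).
Proof.
set K := k%:Z.
apply: (stepU' (urecS 7 k 0) (N := 49) (p := 7) (a' := (1 + (- 21) * K)) (e := ((- 6) * K ^+ 2 + (- 56) * K ^+ 3 + (- 147) * K ^+ 4)) (Yc := (1)) (A := (2 + 106 * K + (- 720) * K ^+ 2 + (- (42 * 1000 + 336)) * K ^+ 3 + (- (254 * 1000 + 16)) * K ^+ 4)) (B := 0) (Z := ((- 1) * K + 1 * K ^+ 2))).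
- by [].
- by rewrite /K; ring.
- by rewrite addn0 mul1r; exact: bab7.
- by rewrite /K; ring.
- apply: (Zapply (Z7 k)); rewrite /K; ring.
Qed.

Lemma l7_2 k : cg 49 (u (7 * k + 2)%N) ((7 + (- 7) * (k%:Z)) * u k).
Proof.
set K := k%:Z.
apply: (stepU' (urecS 7 k 1) (N := 49) (p := 7) (a' := ((- 6) + 14 * K)) (e := ((- 1) + (- 8) * K + (- 12) * K ^+ 2 + 42 * K ^+ 3 + 98 * K ^+ 4)) (Yc := (22 + 14 * K)) (A := ((- (14 * 1000 + 935)) + (- (190 * 1000 + 985)) * K + (- (637 * 1000 + 152)) * K ^+ 2 + (466 * 1000 + 368) * K ^+ 3 + ((4 * 1000 + 233) * 1000 + 600) * K ^+ 4 + ((2 * 1000 + 370) * 1000 + 816) * K ^+ 5)) (B := 0) (Z := ((- 1) * K + 1 * K ^+ 2))).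
- by [].
- by rewrite /K; ring.
- exact: l7_1.
- by rewrite /K; ring.
- apply: (Zapply (Z7 k)); rewrite /K; ring.
Qed.

Lemma l7_3 k : cg 49 (u (7 * k + 3)%N) ((21 + (- 21) * (k%:Z)) * u k).
Proof.
set K := k%:Z.
apply: (stepU' (urecS 7 k 2) (N := 49) (p := 7) (a' := (20 + 7 * K)) (e := (11 + 81 * K + 207 * K ^+ 2 + 203 * K ^+ 3 + 49 * K ^+ 4)) (Yc := (7 + (- 7) * K)) (A := ((75 * 1000 + 771) + (594 * 1000 + 909) * K + ((1 * 1000 + 369) * 1000 + 176) * K ^+ 2 + (288 * 1000 + 624) * K ^+ 3 + (- ((1 * 1000 + 735) * 1000 + 776)) * K ^+ 4 + (- (592 * 1000 + 704)) * K ^+ 5)) (B := 0) (Z := ((- 1) * K + 1 * K ^+ 2))).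
- by [].
- by rewrite /K; ring.
- exact: l7_2.
- by rewrite /K; ring.
- apply: (Zapply (Z7 k)); rewrite /K; ring.
Qed.

Lemma l7_4 k : cg 49 (u (7 * k + 4)%N) (0 * u k).
Proof.
set K := k%:Z.
apply: (stepU' (urecS 7 k 3) (N := 49) (p := 7) (a' := ((- 13) + 7 * K)) (e := ((- 17) + (- 80) * K + (- 108) * K ^+ 2 + (- 7) * K ^+ 3 + 49 * K ^+ 4)) (Yc := (21 + (- 21) * K)) (A := ((- (409 * 1000 + 32)) + (- ((1 * 1000 + 839) * 1000 + 888)) * K + (- ((1 * 1000 + 374) * 1000 + 840)) * K ^+ 2 + ((2 * 1000 + 988) * 1000 + 720) * K ^+ 3 + ((2 * 1000 + 413) * 1000 + 152) * K ^+ 4 + (- ((1 * 1000 + 778) * 1000 + 112)) * K ^+ 5)) (B := 0) (Z := ((- 1) * K + 1 * K ^+ 2))).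
- by [].
- by rewrite /K; ring.
- exact: l7_3.
- by rewrite /K; ring.
- apply: (Zapply (Z7 k)); rewrite /K; ring.
Qed.

Lemma l7_5 k : cg 49 (u (7 * k + 5)%N) (0 * u k).
Proof.
set K := k%:Z.
apply: (stepU' (urecS 7 k 4) (N := 49) (p := 7) (a' := (20 + 14 * K)) (e := (51 + 250 * K + 450 * K ^+ 2 + 350 * K ^+ 3 + 98 * K ^+ 4)) (Yc := 0) (A := 0) (B := 0) (Z := ((- 1) * K + 1 * K ^+ 2))).
- by [].
- by rewrite /K; ring.
- exact: l7_4.
- by rewrite /K; ring.
- apply: (Zapply (Z7 k)); rewrite /K; ring.
Qed.

Lemma l7_6 k : cg 49 (u (7 * k + 6)%N) (0 * u k).
Proof.
set K := k%:Z.
apply: (stepU' (urecS 7 k 5) (N := 49) (p := 7) (a' := ((- 22) + (- 21) * K)) (e := ((- 97) + (- 432) * K + (- 720) * K ^+ 2 + (- 532) * K ^+ 3 + (- 147) * K ^+ 4)) (Yc := 0) (A := 0) (B := 0) (Z := ((- 1) * K + 1 * K ^+ 2))).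
- by [].
- by rewrite /K; ring.
- exact: l7_5.
- by rewrite /K; ring.
- apply: (Zapply (Z7 k)); rewrite /K; ring.
Qed.

Lemma v7_0 k : cg 49 (V (7 * k + 0)%N) ((1 + 42 * (k%:Z)) * u k).
Proof.
set K := k%:Z.
rewrite /V (_ : Posz (6 * (7 * k + 0) + 1)%N = (1 + 42 * K)); last by rewrite /K -!natz !(natrM, natrD); ring.
apply: (mulU (N := 49) (p := 7) (Tc := (1)) (A := 0) (B := 0) (Z := ((- 1) * K + 1 * K ^+ 2))).
- by [].
- by rewrite addn0 mul1r; exact: bab7.
- by rewrite /K; ring.
- apply: (Zapply (Z7 k)); rewrite /K; ring.
Qed.

Lemma v7_1 k : cg 49 (V (7 * k + 1)%N) ((7 + (- 7) * (k%:Z)) * u k).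
Proof.
set K := k%:Z.
rewrite /V (_ : Posz (6 * (7 * k + 1) + 1)%N = (7 + 42 * K)); last by rewrite /K -!natz !(natrM, natrD); ring.
apply: (mulU (N := 49) (p := 7) (Tc := (22 + 14 * K)) (A := (3 + 21 * K + 12 * K ^+ 2)) (B := 0) (Z := ((- 1) * K + 1 * K ^+ 2))).
- by [].
- exact: l7_1.
- by rewrite /K; ring.
- apply: (Zapply (Z7 k)); rewrite /K; ring.
Qed.

Lemma v7_2 k : cg 49 (V (7 * k + 2)%N) ((42 + (- 42) * (k%:Z)) * u k).
Proof.
set K := k%:Z.
rewrite /V (_ : Posz (6 * (7 * k + 2) + 1)%N = (13 + 42 * K)); last by rewrite /K -!natz !(natrM, natrD); ring.
apply: (mulU (N := 49) (p := 7) (Tc := (7 + (- 7) * K)) (A := (1 + 5 * K + (- 6) * K ^+ 2)) (B := 0) (Z := ((- 1) * K + 1 * K ^+ 2))).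
- by [].
- exact: l7_2.
- by rewrite /K; ring.
- apply: (Zapply (Z7 k)); rewrite /K; ring.
Qed.

Lemma v7_3 k : cg 49 (V (7 * k + 3)%N) ((7 + (- 7) * (k%:Z)) * u k).
Proof.
set K := k%:Z.
rewrite /V (_ : Posz (6 * (7 * k + 3) + 1)%N = (19 + 42 * K)); last by rewrite /K -!natz !(natrM, natrD); ring.
apply: (mulU (N := 49) (p := 7) (Tc := (21 + (- 21) * K)) (A := (8 + 10 * K + (- 18) * K ^+ 2)) (B := 0) (Z := ((- 1) * K + 1 * K ^+ 2))).
- by [].
- exact: l7_3.
- by rewrite /K; ring.
- apply: (Zapply (Z7 k)); rewrite /K; ring.
Qed.

Lemma v7_4 k : cg 49 (V (7 * k + 4)%N) (0 * u k).
Proof.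
set K := k%:Z.
rewrite /V (_ : Posz (6 * (7 * k + 4) + 1)%N = (25 + 42 * K)); last by rewrite /K -!natz !(natrM, natrD); ring.
apply: (mulU (N := 49) (p := 7) (Tc := 0) (A := 0) (B := 0) (Z := ((- 1) * K + 1 * K ^+ 2))).
- by [].
- exact: l7_4.
- by rewrite /K; ring.
- apply: (Zapply (Z7 k)); rewrite /K; ring.
Qed.

Lemma v7_5 k : cg 49 (V (7 * k + 5)%N) (0 * u k).
Proof.
set K := k%:Z.
rewrite /V (_ : Posz (6 * (7 * k + 5) + 1)%N = (31 + 42 * K)); last by rewrite /K -!natz !(natrM, natrD); ring.
apply: (mulU (N := 49) (p := 7) (Tc := 0) (A := 0) (B := 0) (Z := ((- 1) * K + 1 * K ^+ 2))).
- by [].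
- exact: l7_5.
- by rewrite /K; ring.
- apply: (Zapply (Z7 k)); rewrite /K; ring.
Qed.

Lemma v7_6 k : cg 49 (V (7 * k + 6)%N) (0 * u k).
Proof.
set K := k%:Z.
rewrite /V (_ : Posz (6 * (7 * k + 6) + 1)%N = (37 + 42 * K)); last by rewrite /K -!natz !(natrM, natrD); ring.
apply: (mulU (N := 49) (p := 7) (Tc := 0) (A := 0) (B := 0) (Z := ((- 1) * K + 1 * K ^+ 2))).
- by [].
- exact: l7_6.
- by rewrite /K; ring.
- apply: (Zapply (Z7 k)); rewrite /K; ring.
Qed.


Lemma sum_mult (p : nat) (h : nat -> int) n : (0 < p)%N ->
  \sum_(i < n.+1) (if (p %| i)%N then h i else 0) = \sum_(k < (n %/ p).+1) h (p * k)%N.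
Proof.
move=> hp; elim: n => [|n IH].
  by rewrite div0n !big_ord_recr !big_ord0 /= dvdn0 muln0.
rewrite big_ord_recr /= IH divnS //.
case: ifP => hd /=; last by rewrite addr0.
rewrite add1n [in RHS]big_ord_recr /=; congr (_ + h _).
by rewrite -{1}(divnK hd) divnS // hd mulnC.
Qed.

Lemma smul_sub (p : nat) (F g : series) n : (0 < p)%N ->
  smul F (subst_pow p g) n = \sum_(k < (n %/ p).+1) F (n - p * k)%N * g k.
Proof.
move=> hp; rewrite /smul (reindex_inj rev_ord_inj) /=.
transitivity (\sum_(i < n.+1) (if (p %| i)%N then F (n - i)%N * g (i %/ p)%N else 0)).
  apply: eq_bigr => i _; rewrite /subst_pow subSS.
  have hi : (i <= n)%N by rewrite -ltnS.
  rewrite subKn //.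
  by case: ifP => _; last by rewrite mulr0.
rewrite (sum_mult (fun i => F (n - i)%N * g (i %/ p)%N) n hp).
by apply: eq_bigr => k _; rewrite mulKn.
Qed.

Lemma rhs_poly (p : nat) (s : seq int) (g : series) m j : (0 < p)%N -> (j < p)%N -> (size s <= p)%N ->
  smul (polyS s) (subst_pow p g) (p * m + j)%N = nth 0 s j * g m.
Proof.
move=> hp hj hs; rewrite smul_sub //.
rewrite (_ : ((p * m + j) %/ p = m)%N); last by rewrite mulnC divnMDl // divn_small // addn0.
rewrite big_ord_recr /= big1 ?add0r; first by rewrite addKn.
move=> [k hk] _ /=; rewrite /polyS nth_default ?mul0r //.
have : (p * k.+1 <= p * m)%N by rewrite leq_mul2l hk orbT.
rewrite mulnS => hh; apply: (leq_trans hs); lia.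
Qed.

Lemma Qform (s : seq int) q j : (j < 7)%N -> (size s <= 14)%N ->
  smul (polyS s) inv_1pt7 (7 * q + j)%N =
  (-1) ^+ q * (nth 0 s j - nth 0 s (7 + j)) + (if q == 0%N then nth 0 s (7 + j) else 0).
Proof.
move=> hj hs.
change inv_1pt7 with (subst_pow 7 (fun q : nat => (-1) ^+ q : int)).
rewrite smul_sub //.
rewrite (_ : ((7 * q + j) %/ 7 = q)%N); last by rewrite mulnC divnMDl // divn_small // addn0.
case: q => [|q].
  by rewrite big_ord_recr big_ord0 /= /polyS !muln0 !subn0 add0n expr0; ring.
rewrite big_ord_recr big_ord_recr /= big1 ?add0r; last first.
  move=> [k hk] _ /=; rewrite /polyS nth_default ?mul0r //.
  apply: (leq_trans hs); lia.
rewrite /polyS.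
rewrite (_ : (7 * q.+1 + j - 7 * q.+1 = j)%N); last lia.
rewrite (_ : (7 * q.+1 + j - 7 * q = 7 + j)%N); last lia.
rewrite exprS; ring.
Qed.

Definition W (m : nat) : int := \sum_(k < m.+1) (-1) ^+ (m - k) * u k.

Lemma rhs7 (s : seq int) m j : (j < 7)%N -> (size s <= 14)%N ->
  smul (sdiv_1pt7 (polyS s)) (subst_pow 7 U) (7 * m + j)%N =
  (nth 0 s j - nth 0 s (7 + j)) * W m + nth 0 s (7 + j) * u m.
Proof.
move=> hj hs; rewrite smul_sub //.
rewrite (_ : ((7 * m + j) %/ 7 = m)%N); last by rewrite mulnC divnMDl // divn_small // addn0.
transitivity (\sum_(k < m.+1) (((-1) ^+ (m - k) * (nth 0 s j - nth 0 s (7 + j))) * u k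
     + (if (m - k == 0)%N then nth 0 s (7 + j) else 0) * u k)).
  apply: eq_bigr => [[k hk]] _ /=.
  rewrite /sdiv_1pt7 (_ : (7 * m + j - 7 * k = 7 * (m - k) + j)%N); last lia.
  by rewrite Qform // -mulrDl.
rewrite big_split /= /W mulr_sumr; congr (_ + _).
  by apply: eq_bigr => k _; ring.
rewrite big_ord_recr /= subnn /= big1 ?add0r //.
move=> [k hk] _ /=.
by rewrite (_ : (m - k == 0)%N = false) ?mul0r //; apply/negbTE; lia.
Qed.
Lemma key7_0 q : (7 %| ((7 * q + 0)%N%:Z + 1) * u ((7 * q + 0).+1)%N + ((7 * q + 0)%N%:Z - 1) * u (7 * q + 0)%N)%Z.
Proof.
rewrite -addnS PoszD PoszM.
set K := q%:Z.
apply: (keyL (urecS 7 q 0) (a' := (1)) (e := (3 * K + 21 * K ^+ 2 + 49 * K ^+ 3)) (A := (17 + (1 * 1000 + 225) * K + (25 * 1000 + 872) * K ^+ 2 + (211 * 1000 + 680) * K ^+ 3 + (592 * 1000 + 704) * K ^+ 4)) (B := 0) (Zf := 0)).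
- by rewrite /K; ring.
- by rewrite /K; ring.
- by rewrite mul0r dvdz0.
Qed.

Lemma key7_1 q : (7 %| ((7 * q + 1)%N%:Z + 1) * u ((7 * q + 1).+1)%N + ((7 * q + 1)%N%:Z - 1) * u (7 * q + 1)%N)%Z.
Proof.
rewrite -addnS PoszD PoszM.
set K := q%:Z.
apply: (keyL (urecS 7 q 1) (a' := (1)) (e := (1 + 12 * K + 42 * K ^+ 2 + 49 * K ^+ 3)) (A := ((1 * 1000 + 584) + (28 * 1000 + 489) * K + (189 * 1000 + 168) * K ^+ 2 + (550 * 1000 + 368) * K ^+ 3 + (592 * 1000 + 704) * K ^+ 4)) (B := 0) (Zf := 0)).
- by rewrite /K; ring.
- by rewrite /K; ring.
- by rewrite mul0r dvdz0.
Qed.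

Lemma key7_2 q : (7 %| ((7 * q + 2)%N%:Z + 1) * u ((7 * q + 2).+1)%N + ((7 * q + 2)%N%:Z - 1) * u (7 * q + 2)%N)%Z.
Proof.
rewrite -addnS PoszD PoszM.
set K := q%:Z.
apply: (keyL (urecS 7 q 2) (a' := (6)) (e := (23 + 162 * K + 378 * K ^+ 2 + 294 * K ^+ 3)) (A := 0) (B := ((477 * 1000 + 361) + ((5 * 1000 + 172) * 1000 + 55) * K + ((20 * 1000 + 899) * 1000 + 872) * K ^+ 2 + ((37 * 1000 + 340) * 1000 + 352) * K ^+ 3 + ((24 * 1000 + 893) * 1000 + 568) * K ^+ 4)) (Zf := 1)).
- by rewrite /K; ring.
- by rewrite /K; ring.
- by rewrite mul1r; have := m7_2 q; rewrite /cg subr0.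
Qed.

Lemma key7_3 q : (7 %| ((7 * q + 3)%N%:Z + 1) * u ((7 * q + 3).+1)%N + ((7 * q + 3)%N%:Z - 1) * u (7 * q + 3)%N)%Z.
Proof.
rewrite -addnS PoszD PoszM.
set K := q%:Z.
apply: (keyL (urecS 7 q 3) (a' := (1)) (e := (9 + 48 * K + 84 * K ^+ 2 + 49 * K ^+ 3)) (A := 0) (B := ((293 * 1000 + 666) + ((2 * 1000 + 286) * 1000 + 655) * K + ((6 * 1000 + 658) * 1000 + 512) * K ^+ 2 + ((8 * 1000 + 594) * 1000 + 208) * K ^+ 3 + ((4 * 1000 + 148) * 1000 + 928) * K ^+ 4)) (Zf := 1)).
- by rewrite /K; ring.
- by rewrite /K; ring.
- by rewrite mul1r; have := m7_3 q; rewrite /cg subr0.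
Qed.

Lemma key7_4 q : (7 %| ((7 * q + 4)%N%:Z + 1) * u ((7 * q + 4).+1)%N + ((7 * q + 4)%N%:Z - 1) * u (7 * q + 4)%N)%Z.
Proof.
rewrite -addnS PoszD PoszM.
set K := q%:Z.
apply: (keyL (urecS 7 q 4) (a' := (6)) (e := (107 + 450 * K + 630 * K ^+ 2 + 294 * K ^+ 3)) (A := 0) (B := (((4 * 1000 + 698) * 1000 + 3) + ((28 * 1000 + 581) * 1000 + 847) * K + ((65 * 1000 + 98) * 1000 + 656) * K ^+ 2 + ((65 * 1000 + 790) * 1000 + 144) * K ^+ 3 + ((24 * 1000 + 893) * 1000 + 568) * K ^+ 4)) (Zf := 1)).
- by rewrite /K; ring.
- by rewrite /K; ring.
- by rewrite mul1r; have := m7_4 q; rewrite /cg subr0.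
Qed.

Lemma key7_5 q : (7 %| ((7 * q + 5)%N%:Z + 1) * u ((7 * q + 5).+1)%N + ((7 * q + 5)%N%:Z - 1) * u (7 * q + 5)%N)%Z.
Proof.
rewrite -addnS PoszD PoszM.
set K := q%:Z.
apply: (keyL (urecS 7 q 5) (a' := (6)) (e := (185 + 648 * K + 756 * K ^+ 2 + 294 * K ^+ 3)) (A := 0) (B := (((10 * 1000 + 311) * 1000 + 844) + ((51 * 1000 + 499) * 1000 + 735) * K + ((96 * 1000 + 342) * 1000 + 624) * K ^+ 2 + ((80 * 1000 + 15) * 1000 + 40) * K ^+ 3 + ((24 * 1000 + 893) * 1000 + 568) * K ^+ 4)) (Zf := 1)).
- by rewrite /K; ring.
- by rewrite /K; ring.
- by rewrite mul1r; have := m7_5 q; rewrite /cg subr0.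
Qed.


Lemma key7_6 q : (7 %| ((7 * q + 6)%N%:Z + 1) * u ((7 * q + 6).+1)%N + ((7 * q + 6)%N%:Z - 1) * u (7 * q + 6)%N)%Z.
Proof.
rewrite PoszD PoszM; apply: rpredD.
  apply: dvdz_mulr; rewrite (_ : 7%:Z * q%:Z + 6%:Z + 1 = 7 * (q%:Z + 1)); last ring.
  by apply: dvdz_mulr.
by apply: dvdz_mull; have := m7_6 q; rewrite /cg subr0.
Qed.

Lemma key7 m : (7 %| (m%:Z + 1) * u m.+1 + (m%:Z - 1) * u m)%Z.
Proof.
rewrite (divn_eq m 7) (mulnC _ 7).
have : (m %% 7 < 7)%N by rewrite ltn_pmod.
case: (m %% 7)%N => [|[|[|[|[|[|[|j]]]]]]] // _.
- exact: key7_0.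
- exact: key7_1.
- exact: key7_2.
- exact: key7_3.
- exact: key7_4.
- exact: key7_5.
- exact: key7_6.
Qed.

Lemma Wrec m : W m.+1 = u m.+1 - W m.
Proof.
rewrite /W big_ord_recr /= subnn expr0 mul1r addrC -sumrN; congr (_ + _).
apply: eq_bigr => [[k hk]] _ /=.
by rewrite subSn // exprS mulN1r mulNr.
Qed.

Lemma W7 m : (7 %| W m + (m%:Z - 1) * u m)%Z.
Proof.
elim: m => [|m IH].
  rewrite /W big_ord_recr big_ord0 /= add0r subnn expr0 mul1r.
  by rewrite (_ : u 0 + (0%:Z - 1) * u 0 = 0) ?dvdz0 //; ring.
rewrite Wrec.
rewrite (_ : u m.+1 - W m + (m.+1%:Z - 1) * u m.+1 =
   ((m%:Z + 1) * u m.+1 + (m%:Z - 1) * u m) - (W m + (m%:Z - 1) * u m)); last by rewrite intS; ring.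
apply: rpredB; [exact: key7 | exact: IH].
Qed.

Lemma fin7 (D d Pj P7 L Wm uu K : int) : (7 %| Wm + (K - 1) * uu)%Z ->
  Pj - P7 = D -> D = 7 * d -> L = Pj - 7 * d * K -> cg 49 (L * uu) (D * Wm + P7 * uu).
Proof.
move=> h hP hD hL; rewrite /cg hL.
have -> : Pj = P7 + D by rewrite -hP; ring.
rewrite hD.
rewrite (_ : (P7 + 7 * d - 7 * d * K) * uu - (7 * d * Wm + P7 * uu) = (7 * (- d)) * (Wm + (K - 1) * uu)); last ring.
rewrite (_ : 49 = 7 * 7) //; apply: dvdz_mul => //; exact: dvdz_mulr.
Qed.

Lemma l5_0 k : cg 25 (u (5 * k + 0)%N) (1 * u k).
Proof. by rewrite addn0 mul1r; exact: bab5. Qed.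
Lemma l7_0 k : cg 49 (u (7 * k + 0)%N) (1 * u k).
Proof. by rewrite addn0 mul1r; exact: bab7. Qed.

Theorem proposition3p4 :
  [/\ scong (5 ^+ 2) U (smul (polyS [:: 1; 20; 10]) (subst_pow 5 U)),
      scong (5 ^+ 2) V (smul (polyS [:: 1; 15; 5]) (subst_pow 5 U)),
      scong (7 ^+ 2) U
        (smul (sdiv_1pt7 (polyS [:: 1; 22; 7; 21; 0; 0; 0; 1; 36])) (subst_pow 7 U))
    & scong (7 ^+ 2) V
        (smul (sdiv_1pt7 (polyS [:: 1; 7; 42; 7; 0; 0; 0; 43])) (subst_pow 7 U))].
Proof.
split=> n; rewrite /scong.
- rewrite (divn_eq n 5) (mulnC _ 5).
  have : (n %% 5 < 5)%N by rewrite ltn_pmod.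
  case: (n %% 5)%N => [|[|[|[|[|j]]]]] // _; rewrite rhs_poly //.
  + exact: l5_0.
  + exact: l5_1.
  + exact: l5_2.
  + exact: l5_3.
  + exact: l5_4.
- rewrite (divn_eq n 5) (mulnC _ 5).
  have : (n %% 5 < 5)%N by rewrite ltn_pmod.
  case: (n %% 5)%N => [|[|[|[|[|j]]]]] // _; rewrite rhs_poly //.
  + exact: v5_0.
  + exact: v5_1.
  + exact: v5_2.
  + exact: v5_3.
  + exact: v5_4.
- rewrite (divn_eq n 7) (mulnC _ 7).
  have : (n %% 7 < 7)%N by rewrite ltn_pmod.
  set q := (n %/ 7)%N.
  case: (n %% 7)%N => [|[|[|[|[|[|[|j]]]]]]] // _; rewrite rhs7 //.
  + apply: (cg_trans (l7_0 q)); apply: (fin7 (d := 0) (Pj := 1) (K := q%:Z) (W7 q)) => //; ring.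
  + apply: (cg_trans (l7_1 q)); apply: (fin7 (d := -2) (Pj := 22) (K := q%:Z) (W7 q)) => //; ring.
  + apply: (cg_trans (l7_2 q)); apply: (fin7 (d := 1) (Pj := 7) (K := q%:Z) (W7 q)) => //; ring.
  + apply: (cg_trans (l7_3 q)); apply: (fin7 (d := 3) (Pj := 21) (K := q%:Z) (W7 q)) => //; ring.
  + apply: (cg_trans (l7_4 q)); apply: (fin7 (d := 0) (Pj := 0) (K := q%:Z) (W7 q)) => //; ring.
  + apply: (cg_trans (l7_5 q)); apply: (fin7 (d := 0) (Pj := 0) (K := q%:Z) (W7 q)) => //; ring.
  + apply: (cg_trans (l7_6 q)); apply: (fin7 (d := 0) (Pj := 0) (K := q%:Z) (W7 q)) => //; ring.
- rewrite (divn_eq n 7) (mulnC _ 7).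
  have : (n %% 7 < 7)%N by rewrite ltn_pmod.
  set q := (n %/ 7)%N.
  case: (n %% 7)%N => [|[|[|[|[|[|[|j]]]]]]] // _; rewrite rhs7 //.
  + apply: (cg_trans (v7_0 q)); apply: (fin7 (d := -6) (Pj := 1) (K := q%:Z) (W7 q)) => //; ring.
  + apply: (cg_trans (v7_1 q)); apply: (fin7 (d := 1) (Pj := 7) (K := q%:Z) (W7 q)) => //; ring.
  + apply: (cg_trans (v7_2 q)); apply: (fin7 (d := 6) (Pj := 42) (K := q%:Z) (W7 q)) => //; ring.
  + apply: (cg_trans (v7_3 q)); apply: (fin7 (d := 1) (Pj := 7) (K := q%:Z) (W7 q)) => //; ring.
  + apply: (cg_trans (v7_4 q)); apply: (fin7 (d := 0) (Pj := 0) (K := q%:Z) (W7 q)) => //; ring.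
  + apply: (cg_trans (v7_5 q)); apply: (fin7 (d := 0) (Pj := 0) (K := q%:Z) (W7 q)) => //; ring.
  + apply: (cg_trans (v7_6 q)); apply: (fin7 (d := 0) (Pj := 0) (K := q%:Z) (W7 q)) => //; ring.
Qed.
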